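(* Let $G_M$ be a maximal reducible graph and let $T_M$ be a persistent phylogeny solving $G_M$. Then $T_M$ is either a line-tree or a branch-tree.
   Context: Persistent phylogeny. Let $M$ be a binary matrix with rows indexed by species $S$ and columns by characters $C=\{c_1,\dots,c_m\}$, and $A\subseteq C$ (active characters). A persistent phylogeny for $(M,A)$ is a rooted tree $T$ whose nodes $x$ carry vectors $l_x\in\{0,1\}^m$ (the state of $x$) such that: the root $r$ has $l_r[j]=1$ iff $c_j\in A$; each edge is labelled $c_j^+$ for each character changing from 0 to 1 on it and $c_j^-$ for each changing from 1 to 0; each character changes state on at most two edges, and if on two, they lie on one root-to-leaf path with the gain $c_j^+$ closer to the root than the loss $c_j^-$; each row of $M$ equals $l_x$ for some node $x$. Red-black graphs. A red-black graph on species $S$ and characters $C$ is a bipartite graph on $S\cup C$ with red or black edges, each character incident only to black edges (inactive) or only to red edges (active). Its associated matrix has $M[s,c]=1$ iff $(s,c)$ is black, or $c$ is active and $(s,c)$ is not an edge; a tree solving the graph is a persistent phylogeny for (associated matrix, set of active characters). $S(c)=\{s:M[s,c]=1\}$. Realizing $c^+$ ($c$ inactive): with $D(c)$ the species of the component of $c$, add red edges from $c$ to $D(c)\setminus N(c)$, delete black edges on $c$ and isolated vertices; realizing $c^-$ ($c$ active, $D(c)\subseteq N(c)$): delete all edges on $c$ and isolated vertices. An active character red-adjacent to all species is free. A c-reduction $\langle c_1^+,\dots,c_k^+\rangle$ is successful if realizing the characters in order is always defined (realizing negatively each character right after it becomes free) and yields the empty graph. A red-black graph is reducible if it is connected and admits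 a successful reduction (i.e. is solved by some persistent phylogeny). Standing assumption: no free, null (isolated) or universal (inactive and black-adjacent to all species) characters, no species with no characters, no two identical character columns. An inactive character $c$ is maximal if no inactive $c'$ has $S(c)\subsetneq S(c')$. A maximal reducible graph is a reducible red-black graph all of whose characters are inactive and maximal. Trees. A path is simple if its internal nodes have in- and out-degree one. A line-tree is a tree consisting of a single simple path. A branch-tree is a tree consisting of a simple path from the root $r$ to a node $x$ which is the topmost node having more than one child, such that no positive character $c^+$ labels an edge below $x$; $x$ is the branch-node and the path from $r$ to $x$ is the initial path. *)

(* Defs.v *)
From mathcomp Require Import all_boot.

Set Implicit Arguments.
Unset Strict Implicit.
Unset Printing Implicit Defensive.

(* A red-black graph is given by its set of edges (pairs (s,c)) and by its  *)
(* set of active characters.  An edge (s,c) is red iff c is active and      *)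
(* black otherwise, so every character is incident only to black edges     *)
(* (inactive) or only to red edges (active).  The vertices of the graph are *)
(* the non-isolated species and characters (isolated vertices are always    *)
(* deleted).                                                                 *)

Section RedBlack.
Variables (S C : finType).

Record rbgraph := RBGraph { rb_edges : {set S * C}; rb_active : {set C} }.

Implicit Types (G : rbgraph) (s : S) (c : C).

Definition rb_edge G s c : bool := (s, c) \in rb_edges G.
Definition red_edge G s c : bool := rb_edge G s c && (c \in rb_active G).
Definition black_edge G s c : bool := rb_edge G s c && (c \notin rb_active G).

Definition species_vertex G s : bool := [exists c, rb_edge G s c].
Definition char_vertex G c : bool := [exists s, rb_edge G s c].

Definition rb_adj G : rel (S + C) := fun u v =>
  match u, v with
  | inl s, inr c => rb_edge G s c
  | inr c, inl s => rb_edge G s c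
  | _, _ => false
  end.

Definition is_vertex G (u : S + C) : bool :=
  match u with inl s => species_vertex G s | inr c => char_vertex G c end.

Definition rb_connected G : Prop :=
  forall u v, is_vertex G u -> is_vertex G v -> connect (rb_adj G) u v.

Definition rbN G c : {set S} := [set s | rb_edge G s c].
Definition rbD G c : {set S} := [set s | connect (rb_adj G) (inr c) (inl s)].

Definition assoc_matrix G s c : bool :=
  black_edge G s c || ((c \in rb_active G) && ~~ rb_edge G s c).

Definition Sc G c : {set S} := [set s | assoc_matrix G s c].

Definition inactive G c : bool := char_vertex G c && (c \notin rb_active G).
Definition active G c : bool := char_vertex G c && (c \in rb_active G).

Definition free G c : bool :=
  active G c && [forall s, species_vertex G s ==> red_edge G s c].

Definition realize_pos G c : rbgraph :=
  RBGraph ([set e in rb_edges G | e.2 != c] :|: [set (s, c) | s in rbD G c :\: rbN G c])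
          (c |: rb_active G).

(* realizing c^- (c active with D(c) \subset N(c)) *)
Definition realize_neg G c : rbgraph :=
  RBGraph [set e in rb_edges G | e.2 != c] (rb_active G :\ c).

(* realizing negatively all the currently free characters (this is
   order-independent), iterated until no character is free *)
Definition free_set G : {set C} := [set c | free G c].
Definition remove_free G : rbgraph :=
  RBGraph [set e in rb_edges G | e.2 \notin free_set G] (rb_active G :\: free_set G).
Definition close_free G : rbgraph := iter #|C| remove_free G.

Definition reduction_step (oG : option rbgraph) c : option rbgraph :=
  if oG is Some G then
    if inactive G c then Some (close_free (realize_pos G c)) else None
  else None.

Definition successful_reduction G (r : seq C) : bool :=
  if foldl reduction_step (Some G) r is Some G' then rb_edges G' == set0 else false.

Definition reducible G : Prop :=
  rb_connected G /\ exists r : seq C, successful_reduction G r.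

Definition standing_assumptions G : Prop :=
  [/\ forall c, ~~ free G c,
      forall c, char_vertex G c,
      forall c, c \notin rb_active G ->
        ~~ [forall s, species_vertex G s ==> black_edge G s c],
      forall s, species_vertex G s
    & forall c c', (forall s, assoc_matrix G s c = assoc_matrix G s c') -> c = c'].

Definition maximal_char G c : bool :=
  inactive G c && [forall c', inactive G c' ==> ~~ (Sc G c \proper Sc G c')].

Definition maximal_reducible G : Prop :=
  [/\ reducible G, forall c, inactive G c & forall c, maximal_char G c].

End RedBlack.

(* The edges are the pairs (tpar v, v) with v <> root.                       *)

Record rtree (V : finType) := RTree {
  troot : V;
  tpar : V -> V;
  tpar_root : tpar troot = troot;
  t_to_root : forall v, exists n, iter n tpar v = troot
}.

Section Trees.
Variables (C V : finType) (T : rtree V) (l : V -> {set C}).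

Definition anc (u v : V) : Prop := exists n, iter n (tpar T) v = u.

Definition is_edge (v : V) : bool := v != troot T.

Definition changes (v : V) (c : C) : bool :=
  is_edge v && ((c \in l v) != (c \in l (tpar T v))).
Definition gain (v : V) (c : C) : bool :=
  [&& is_edge v, c \notin l (tpar T v) & c \in l v].
Definition loss (v : V) (c : C) : bool :=
  [&& is_edge v, c \in l (tpar T v) & c \notin l v].

(* persistent phylogeny for (M, A); the state of node x is l x (the set of
   characters with value 1).  Every edge carries at least one label. *)
Definition persistent_phylogeny {S : finType} (M : S -> C -> bool) (A : {set C}) : Prop :=
  [/\ l (troot T) = A,
      forall v, is_edge v -> exists c, changes v c,
      forall c, #|[set v | changes v c]| <= 2,
      forall c u w, changes u c -> changes w c -> u != w ->
        (anc u w /\ gain u c /\ loss w c) \/ (anc w u /\ gain w c /\ loss u c)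
    & forall s, exists x, forall c, M s c = (c \in l x)].

Definition children (x : V) : {set V} := [set v | is_edge v & tpar T v == x].

Definition line_tree : Prop := forall x, #|children x| <= 1.

Definition branch_tree : Prop :=
  exists x, [/\ 1 < #|children x|,
                forall y, anc y x -> y != x -> #|children y| <= 1
              & forall v c, is_edge v -> anc x (tpar T v) -> ~~ gain v c].

End Trees.

Definition solves (S C V : finType) (T : rtree V) (l : V -> {set C}) (G : rbgraph S C) : Prop :=
  persistent_phylogeny T l (assoc_matrix G) (rb_active G).

(* Main.v *)
Require Import Defs.
From mathcomp Require Import all_boot.
From Stdlib Require Import Classical.
From mathcomp Require Import zify.
Set Implicit Arguments.
Unset Strict Implicit.
Unset Printing Implicit Defensive.

Section TreeFacts.
Variables (C V : finType) (T : rtree V) (l : V -> {set C}).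
Local Notation par := (tpar T).
Local Notation root := (troot T).
Local Notation anc := (anc T).

Lemma iter_root n : iter n par root = root.
Proof. by elim: n => //= n ->; rewrite tpar_root. Qed.

Lemma anc_refl u : anc u u. Proof. by exists 0. Qed.

Lemma anc_trans u w y : anc u w -> anc w y -> anc u y.
Proof. by move=> [a Ha] [b Hb]; exists (a + b); rewrite iterD Hb. Qed.

Lemma anc_par y : anc (par y) y. Proof. by exists 1. Qed.

Lemma anc_par_anc u y : anc u (par y) -> anc u y.
Proof. by move=> H; apply: anc_trans H (anc_par y). Qed.

Lemma cyc n y : iter n.+1 par y = y -> y = root.
Proof.
move=> H; have [N HN] := t_to_root T y.
have Hk : forall k, iter (k * n.+1) par y = y.
  elim=> // k IH; by rewrite mulSn iterD IH H.
have HNle : N <= N * n.+1 by rewrite leq_pmulr.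
by rewrite -{1}(Hk N) -(subnK HNle) iterD HN iter_root.
Qed.

Lemma anc_par_self y : anc y (par y) -> y = root.
Proof. by move=> [n Hn]; apply: (@cyc n); rewrite iterSr. Qed.

Lemma anc_strict u y : anc u y -> u != y -> anc u (par y).
Proof.
move=> [[|n] Hn] Hne; first by rewrite -Hn eqxx in Hne.
by exists n; rewrite -iterSr.
Qed.

Lemma anc_antisym a b : anc a b -> anc b a -> a = b.
Proof.
move=> [i Hi] [j Hj].
case Hk: (i + j) => [|k].
  have Hi0 : i = 0 by move: Hk; case: i {Hi}.
  by rewrite -Hi Hi0.
have Ha : iter k.+1 par a = a by rewrite -Hk iterD Hj Hi.
have Hr := cyc Ha.
by rewrite -Hj Hr iter_root.
Qed.

Lemma anc_total a b y : anc a y -> anc b y -> anc a b \/ anc b a.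
Proof.
move=> [i Hi] [j Hj]; case: (leqP i j) => Hij.
  by right; exists (j - i); rewrite -Hi -iterD subnK.
by left; exists (i - j); rewrite -Hj -iterD subnK // ltnW.
Qed.

Lemma par_eq_root y : par y = y -> y = root.
Proof. by move=> H; apply: (@cyc 0). Qed.

Lemma child_on_path x n : forall y, iter n.+1 par y = x -> y != x ->
  exists z, [/\ par z = x, z != x & anc z y].
Proof.
elim: n => [|n IH] y Hy Hne.
  by exists y; split => //; apply: anc_refl.
have Hy' : iter n.+1 par (par y) = x by rewrite -iterSr.
case: (eqVneq (par y) x) => Hp.
  by exists y; split => //; apply: anc_refl.
have [z [Hz1 Hz2 Hz3]] := IH _ Hy' Hp.
by exists z; split => //; apply: anc_par_anc.
Qed.

Lemma flip (P : V -> bool) u n : forall y, iter n par y = u -> ~~ P u -> P y ->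
  exists w, [/\ is_edge T w, ~~ P (par w), P w, anc u w & anc w y].
Proof.
elim: n => [|n IH] y Hy Hu Hyy; first by rewrite /= in Hy; rewrite -Hy Hyy in Hu.
have Hy' : iter n par (par y) = u by rewrite -iterSr.
case HP: (P (par y)).
  have [w [H1 H2 H3 H4 H5]] := IH _ Hy' Hu HP.
  by exists w; split => //; apply: anc_par_anc.
exists y; split => //; last by apply: anc_refl.
  apply/negP => /eqP Hr.
  by move: HP; rewrite Hr tpar_root -Hr Hyy.
  by rewrite HP.
by exists n.+1.
Qed.

End TreeFacts.

Section Phylo.
Variables (S C V : finType) (G : rbgraph S C) (T : rtree V) (l : V -> {set C}).
Hypothesis Hstd : standing_assumptions G.
Hypothesis Hmax : maximal_reducible G.
Hypothesis Hsol : solves T l G.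
Local Notation par := (tpar T).
Local Notation root := (troot T).
Local Notation anc := (anc T).
Local Notation gain := (gain T l).
Local Notation loss := (loss T l).
Local Notation changes := (changes T l).

Lemma active0 : rb_active G = set0.
Proof.
case: Hmax => _ Hin _; apply/setP => c; rewrite inE.
by have /andP [_ /negbTE] := Hin c.
Qed.

Lemma assocE s c : assoc_matrix G s c = rb_edge G s c.
Proof. by rewrite /assoc_matrix /black_edge active0 inE andbT /= orbF. Qed.

Lemma lroot : l root = set0.
Proof. by case: Hsol => -> *; rewrite active0. Qed.

Lemma H4 c u w : changes u c -> changes w c -> u != w ->
  (anc u w /\ gain u c /\ loss w c) \/ (anc w u /\ gain w c /\ loss u c).
Proof. by case: Hsol => _ _ _ H _; apply: H. Qed.

Lemma gain_not_loss w c : gain w c -> loss w c -> False.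
Proof. by move=> /and3P [_ _ H] /and3P [_ _ H']; rewrite H in H'. Qed.

Lemma gain_changes w c : gain w c -> changes w c.
Proof. by case/and3P => E /negbTE A B; rewrite /changes E A B. Qed.

Lemma loss_changes w c : loss w c -> changes w c.
Proof. by case/and3P => E A /negbTE B; rewrite /changes E A B. Qed.

Lemma gain_uniq u w c : gain u c -> gain w c -> u = w.
Proof.
move=> Hu Hw; case: (eqVneq u w) => // Hne.
case: (H4 (gain_changes Hu) (gain_changes Hw) Hne) => [[_ [_ L]]|[_ [_ L]]].
  by case: (gain_not_loss Hw L).
by case: (gain_not_loss Hu L).
Qed.

Lemma loss_uniq u w c : loss u c -> loss w c -> u = w.
Proof.
move=> Hu Hw; case: (eqVneq u w) => // Hne.
case: (H4 (loss_changes Hu) (loss_changes Hw) Hne) => [[_ [L _]]|[_ [L _]]].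
  by case: (gain_not_loss L Hu).
by case: (gain_not_loss L Hw).
Qed.

Lemma gain_loss_anc u w c : gain u c -> loss w c -> anc u w.
Proof.
move=> Hu Hw; case: (eqVneq u w) => [E|Hne].
  by subst; case: (gain_not_loss Hu Hw).
case: (H4 (gain_changes Hu) (loss_changes Hw) Hne) => [[A _]|[_ [L _]]] //.
by case: (gain_not_loss L Hw).
Qed.

Lemma gain_anc v c y : gain v c -> c \in l y -> anc v y.
Proof.
move=> Hv Hy; have [n Hn] := t_to_root T y.
have Hr : ~~ (c \in l root) by rewrite lroot inE.
have [w [E P1 P2 _ A]] := flip (P := fun w => c \in l w) Hn Hr Hy.
have Hw : gain w c by rewrite /gain E P1 P2.
by rewrite (gain_uniq Hv Hw).
Qed.

Lemma sub_lemma t c' e z : gain t c' -> e \in l z -> anc z t ->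
  (forall w, anc z w -> ~~ loss w e) -> forall y, c' \in l y -> e \in l y.
Proof.
move=> Ht Hz Hzt Hno y Hy.
have [n Hn] := anc_trans Hzt (gain_anc Ht Hy).
apply/negPn/negP => Hey.
have Hz' : ~~ (e \notin l z) by rewrite Hz.
have [w [E P1 P2 A _]] := flip (P := fun w => e \notin l w) Hn Hz' Hey.
by move: (Hno w A); rewrite /loss E (negbNE P1) P2.
Qed.

Lemma contra_lemma c' e : c' != e -> (forall y, c' \in l y -> e \in l y) -> False.
Proof.
move=> Hne Hsub.
case: Hmax => _ Hin /(_ c') /andP [_ /forallP /(_ e)].
rewrite Hin /= => /negP; apply.
have Hs : Sc G c' \subset Sc G e.
  apply/subsetP => s; rewrite !inE.
  case: Hsol => _ _ _ _ /(_ s) [y Hy].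
  by rewrite !Hy; apply: Hsub.
rewrite properEneq Hs andbT; apply/negP => /eqP Heq.
case: Hstd => _ _ _ _ Hdist.
move: Hne; rewrite (Hdist c' e) ?eqxx // => s.
by move/setP: Heq => /(_ s); rewrite !inE.
Qed.

End Phylo.
Unset Printing Implicit Defensive.

Lemma topmost (V : finType) (T : rtree V) n : forall x0,
  iter n (tpar T) x0 = troot T -> 1 < #|children T x0| ->
  exists x, 1 < #|children T x| /\
    forall y, anc T y x -> y != x -> #|children T y| <= 1.
Proof.
elim/ltn_ind: n => n IH x0 Hn Hc.
case: (classic (exists y, [/\ anc T y x0, y != x0 & 1 < #|children T y|])) =>
  [[y [[k Hk] Hne Hy]]|Hnone]; last first.
  exists x0; split => // y A Ne; rewrite leqNgt; apply/negP => H.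
  by apply: Hnone; exists y.
case: k Hk => [|k] Hk; first by rewrite -Hk eqxx in Hne.
case: (leqP k.+1 n) => Hkn.
  apply: (IH (n - k.+1)) Hy; first by lia.
  by rewrite -Hk -iterD subnK.
have Hyr : y = troot T.
  by rewrite -Hk -(subnK (ltnW Hkn)) iterD Hn iter_root.
case: n Hn IH {Hkn} => [|n] Hn IH.
  by move: Hne; rewrite /= in Hn; rewrite Hn Hyr eqxx.
by apply: (IH 0) Hy.
Qed.

Theorem lemma2 (S C : finType) (G : rbgraph S C)
  (V : finType) (T : rtree V) (l : V -> {set C}) :
  standing_assumptions G ->
  maximal_reducible G ->
  solves T l G ->
  line_tree T \/ branch_tree T l.
Proof.
move=> Hstd Hmax Hsol.
case: (boolP [exists x, 1 < #|children T x|]) => [/existsP [x0 Hx0]|Hno]; last first.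
  left => x; rewrite leqNgt; apply/negP => H; move/negP: Hno; apply.
  by apply/existsP; exists x.
have [n0 Hn0] := t_to_root T x0.
have [x [Hc Htop]] := topmost Hn0 Hx0.
right; exists x; split => // v c Ev Hxv; apply/negP => Hg.
have Hvx : v != x.
  apply/eqP => E; subst; move: Ev; rewrite /is_edge (anc_par_self Hxv) eqxx //.
have [[|m] Hn] := anc_par_anc Hxv; first by rewrite -Hn eqxx in Hvx.
have [x1 [Hp1 Hx1x Hx1v]] := child_on_path Hn Hvx.
have E1 : is_edge T x1.
  apply/negP => /eqP Er; move: Hp1; rewrite Er tpar_root => Ex.
  by rewrite Er -Ex eqxx in Hx1x.
have [x2 [Hx2 Hx12]] : exists x2, x2 \in children T x /\ x1 != x2.
  have [a [b [Ha Hb Hab]]] := card_gt1P Hc.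
  case: (eqVneq a x1) => [E|Ne]; last by exists a; rewrite eq_sym.
  by exists b; split => //; rewrite -E.
move: Hx2; rewrite inE => /andP [E2 /eqP Hp2].
have Nanc : anc T x1 x2 -> False.
  move=> A; have := anc_strict A Hx12; rewrite Hp2 -Hp1 => /anc_par_self Er.
  by move: E1; rewrite /is_edge Er eqxx.
have Hx21 : x2 != x1 by rewrite eq_sym.
have Nanc' : anc T x2 x1 -> False.
  move=> A; have := anc_strict A Hx21; rewrite Hp1 -Hp2 => /anc_par_self Er.
  by move: E2; rewrite /is_edge Er eqxx.
have Hcx : c \notin l x.
  apply/negP => Hcx; move: Hxv => [k Hk].
  have Hcx' : ~~ (c \notin l x) by rewrite Hcx.
  have Hpv : c \notin l (tpar T v) by case/and3P: Hg.
  have [w [Ew P1 P2 Aw Awv]] := flip (P := fun w => c \notin l w) Hk Hcx' Hpv.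
  have Lw : loss T l w c by rewrite /loss Ew (negbNE P1) P2.
  have := anc_trans (gain_loss_anc Hsol Hg Lw) Awv => /anc_par_self Er.
  by move: Ev; rewrite /is_edge Er eqxx.
have [d Hd] : exists d, changes T l x2 d by case: Hsol => _ H _ _ _; apply: H.
move: Hd; rewrite /changes E2 /= Hp2.
case Hd2: (d \in l x2); case Hdx: (d \in l x) => //= _.
-
  have Hg2 : gain T l x2 d by rewrite /gain E2 Hp2 Hdx Hd2.
  have Hlx : forall e, e \in l x -> False.
    move=> e He.
    have Hec : c != e by apply/eqP => E; subst; rewrite He in Hcx.
    have Hed : d != e by apply/eqP => E; subst; rewrite He in Hdx.
    case: (classic (exists w, anc T x1 w /\ loss T l w e)) => [[w [Aw Lw]]|Hnone].
    + have He2 : e \in l x2.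
        apply/negPn/negP => H.
        have L2 : loss T l x2 e by rewrite /loss E2 Hp2 He H.
        by rewrite (loss_uniq Hsol Lw L2) in Aw; apply: Nanc.
      have Hno : forall w', anc T x2 w' -> ~~ loss T l w' e.
        move=> w' A'; apply/negP => L'; rewrite (loss_uniq Hsol L' Lw) in A'.
        by case: (anc_total Aw A') => [/Nanc|/Nanc'].
      exact: (contra_lemma Hstd Hmax Hsol Hed
                (sub_lemma Hmax Hsol Hg2 He2 (anc_refl T x2) Hno)).
    + have He1 : e \in l x1.
        apply/negPn/negP => H.
        have L1 : loss T l x1 e by rewrite /loss E1 Hp1 He H.
        by apply: Hnone; exists x1; split => //; apply: anc_refl.
      have Hno : forall w, anc T x1 w -> ~~ loss T l w e.
        by move=> w A; apply/negP => L; apply: Hnone; exists w.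
      exact: (contra_lemma Hstd Hmax Hsol Hec (sub_lemma Hmax Hsol Hg He1 Hx1v Hno)).
  pose X e := exists w, gain T l w e /\ anc T x1 w.
  pose Pr (u : S + C) := match u with inl s => forall e, rb_edge G s e -> X e | inr e => X e end.
  have Hcl : forall u u', Pr u -> rb_adj G u u' -> Pr u'.
    case=> [s|e] [s'|e'] //= Hu Hadj; first exact: Hu.
    move: Hu => [w [Gw Aw]] e' He'.
    have [_ _ _ _ /(_ s') [y Hy]] := Hsol.
    have Hey : e \in l y by rewrite -Hy assocE.
    have Hey' : e' \in l y by rewrite -Hy assocE.
    have [a Ha] := anc_trans Aw (gain_anc Hmax Hsol Gw Hey).
    have Ha' : iter a.+1 (tpar T) y = x by rewrite iterS Ha.
    have Hex : ~~ (e' \in l x) by apply/negP => /Hlx.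
    have [w'' [E'' P1 P2 Ax Ay]] := flip (P := fun w => e' \in l w) Ha' Hex Hey'.
    exists w''; split; first by rewrite /gain E'' P1 P2.
    have Ax1y : anc T x1 y by exists a.
    case: (anc_total Ax1y Ay) => // A.
    case: (eqVneq w'' x1) => [->|Ne]; first exact: anc_refl.
    have := anc_strict A Ne; rewrite Hp1 => A2.
    have Ew := anc_antisym A2 Ax.
    by exfalso; apply: (Hlx e'); rewrite -Ew.
  have Hpath : forall p a, Pr a -> path (rb_adj G) a p -> Pr (last a p).
    elim=> [|b p IH] a Ha //= /andP [Hab Hp].
    exact: (IH b (Hcl _ _ Ha Hab) Hp).
  have Hconn : connect (rb_adj G) (inr c) (inr d).
    case: Hmax => [[Hcon _] _ _]; apply: Hcon => /=;
      by case: Hstd => _ Hv _ _ _; apply: Hv.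
  move/connectP: Hconn => [p Hp Hlast].
  have : Pr (inr d) by rewrite Hlast; apply: Hpath Hp; exists v.
  move=> [w [Gw Aw]]; rewrite (gain_uniq Hsol Gw Hg2) in Aw.
  exact: Nanc Aw.
-
  have Hl2 : loss T l x2 d by rewrite /loss E2 Hp2 Hdx Hd2.
  have Hd1 : d \in l x1.
    apply/negPn/negP => H.
    have L1 : loss T l x1 d by rewrite /loss E1 Hp1 Hdx H.
    by move: Hx12; rewrite (loss_uniq Hsol L1 Hl2) eqxx.
  have Hno : forall w, anc T x1 w -> ~~ loss T l w d.
    move=> w A; apply/negP => L; rewrite (loss_uniq Hsol L Hl2) in A.
    exact: Nanc A.
  have Hcd : c != d by apply/eqP => E; subst; rewrite Hdx in Hcx.
  exact: (contra_lemma Hstd Hmax Hsol Hcd (sub_lemma Hmax Hsol Hg Hd1 Hx1v Hno)).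
Qed.
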